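(* If $\mathscr{F}=(\Omega,\sqsubseteq,\mathcal{E},\mathcal{A},\mathcal{K},\mathcal{B})$ is an epistemic possibility frame, then $\mathscr{F}^+=((\mathcal{E},\subseteq),\mathbf{A},\mathbf{K},\mathbf{B})$ is an epistemic awareness algebra.
   Context: For a poset $(\Omega,\sqsubseteq)$, let $\downarrow E=\{\omega\mid \omega\sqsubseteq\nu\text{ for some }\nu\in E\}$, $\downarrow\nu=\downarrow\{\nu\}$, $\rho(E)=\{\omega\mid \forall\omega'\sqsubseteq\omega\ \exists\omega''\sqsubseteq\omega'\colon \omega''\in\downarrow E\}$; $\mathcal{RO}(\Omega,\sqsubseteq)=\{E\mid\rho(E)=E\}$, a Boolean algebra under $\subseteq$ with meet $\cap$, join $E\sqcup F=\rho(E\cup F)$, complement $\neg E=\{\omega\mid\forall\omega'\sqsubseteq\omega,\ \omega'\notin E\}$. $\max(E)=\{\omega\in E\mid\text{no }\nu\in E\text{ with }\omega\sqsubseteq\nu,\ \nu\not\sqsubseteq\omega\}$. A possibility frame $(\Omega,\sqsubseteq,\mathcal{E})$ has $\mathcal{E}\subseteq\mathcal{RO}(\Omega,\sqsubseteq)$ nonempty, closed under binary $\cap$ and $\neg$; quasi-principal means: for all $E\in\mathcal{E}$, $\omega\in E$, $\omega\in\downarrow\max(E)$. A possibility frame with awareness $(\Omega,\sqsubseteq,\mathcal{E},\mathcal{A})$: $(\Omega,\sqsubseteq,\mathcal{E})$ quasi-principal with maximum element $m$; $\mathcal{A}:\Omega\to\wp(\Omega)$ with, for all $\omega,\omega',\nu$: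 $m\in\mathcal{A}(\omega)$; $\nu\in\mathcal{A}(\omega)\Rightarrow\downarrow\nu\in\mathcal{E}$; $\omega'\sqsubseteq\omega\Rightarrow\mathcal{A}(\omega)\subseteq\mathcal{A}(\omega')$; $\nu\notin\mathcal{A}(\omega)\Rightarrow\exists\omega'\sqsubseteq\omega\ \forall\omega''\sqsubseteq\omega'\ \nu\notin\mathcal{A}(\omega'')$; if $\nu\in\mathcal{A}(\omega)$, $E,E'\in\mathcal{E}$ and $\max(E\cap\downarrow\nu)\cup\max(E'\cap\downarrow\nu)\subseteq\mathcal{A}(\omega)$ then $\max((E\sqcup E')\cap\downarrow\nu)\subseteq\mathcal{A}(\omega)$; and $\mathcal{E}$ is closed under $\mathbf{A}$, where $\omega\in\mathbf{A}(E)$ iff $\forall\omega'\sqsubseteq\omega\ \forall\nu\in\mathcal{A}(\omega')$: $\max(E\cap\downarrow\nu)\cup\max(\neg E\cap\downarrow\nu)\subseteq\mathcal{A}(\omega')$. An epistemic possibility frame $(\Omega,\sqsubseteq,\mathcal{E},\mathcal{A},\mathcal{K},\mathcal{B})$ adds $\mathcal{K},\mathcal{B}:\Omega\to\wp(\Omega)$ such that for $\mathcal{R}\in\{\mathcal{K},\mathcal{B}\}$: $\omega'\sqsubseteq\omega\Rightarrow\mathcal{R}(\omega')\subseteq\mathcal{R}(\omega)$; $\mathcal{R}(\omega)\in\mathcal{RO}(\Omega,\sqsubseteq)$; $\nu\in\mathcal{R}(\omega)\Rightarrow\exists\omega'\sqsubseteq\omega\ \forall\omega''\sqsubseteq\omega'\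 \exists\nu'\sqsubseteq\nu\colon\nu'\in\mathcal{R}(\omega'')$; $\omega\in\mathcal{K}(\omega)$; $\mathcal{B}(\omega)\neq\varnothing$; $\mathcal{B}(\omega)\subseteq\mathcal{K}(\omega)$; and $\{\omega\mid\mathcal{R}(\omega)\subseteq E\}\in\mathcal{E}$ for $E\in\mathcal{E}$. Define $\mathbf{K}(E)=\{\omega\mid\mathcal{K}(\omega)\subseteq E,\ \omega\in\mathbf{A}(E)\}$, $\mathbf{B}(E)=\{\omega\mid\mathcal{B}(\omega)\subseteq E,\ \omega\in\mathbf{A}(E)\}$. An epistemic awareness algebra is $(\mathbb{B},A,K,B)$, $\mathbb{B}$ a Boolean algebra, $A,K,B$ unary operations such that for all $a,b$ and $\Box\in\{K,B\}$: $A1=1$; $Aa=A\neg a$; $Aa\sqcap Ab\le A(a\sqcap b)$; $K1=1$; $\Box a\sqcap\Box b\le\Box(a\sqcap b)$; if $a\le b$ then $\Box a\sqcap Ab\le\Box b$; $Ka\le a$; $B0=0$; $Ka\le Ba$; $Ba\le Aa$. *)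

(* Defs.v *)
Set Implicit Arguments.

Section PossDefs.
Variable Omega : Type.
Variable le : Omega -> Omega -> Prop.

Definition pset := Omega -> Prop.

Definition subset (E F : pset) : Prop := forall w, E w -> F w.
Definition inter (E F : pset) : pset := fun w => E w /\ F w.
Definition union (E F : pset) : pset := fun w => E w \/ F w.
Definition emptyset : pset := fun _ => False.
Definition fullset : pset := fun _ => True.

Definition down (E : pset) : pset := fun w => exists v, E v /\ le w v.
Definition down1 (v : Omega) : pset := down (fun u => u = v).

Definition rho (E : pset) : pset :=
  fun w => forall w', le w' w -> exists w'', le w'' w' /\ down E w''.

Definition RO (E : pset) : Prop := forall w, rho E w <-> E w.

Definition negs (E : pset) : pset := fun w => forall w', le w' w -> ~ E w'.
Definition joins (E F : pset) : pset := rho (union E F).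

Definition maxs (E : pset) : pset :=
  fun w => E w /\ ~ (exists v, E v /\ le w v /\ ~ le v w).

Definition poset : Prop :=
  (forall w, le w w) /\
  (forall u v w, le u v -> le v w -> le u w) /\
  (forall u v, le u v -> le v u -> u = v).

Definition possibility_frame (Ecal : pset -> Prop) : Prop :=
  poset /\
  (forall E, Ecal E -> RO E) /\
  (exists E, Ecal E) /\
  (forall E F, Ecal E -> Ecal F -> Ecal (inter E F)) /\
  (forall E, Ecal E -> Ecal (negs E)).

Definition quasi_principal (Ecal : pset -> Prop) : Prop :=
  forall E w, Ecal E -> E w -> down (maxs E) w.

(* Awareness: Acal w v  means  v ∈ 𝒜(w) *)
Definition boldA (Acal : Omega -> Omega -> Prop) (E : pset) : pset :=
  fun w => forall w', le w' w -> forall v, Acal w' v ->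
    forall u, union (maxs (inter E (down1 v))) (maxs (inter (negs E) (down1 v))) u ->
      Acal w' u.

Definition awareness_frame (Ecal : pset -> Prop) (Acal : Omega -> Omega -> Prop) : Prop :=
  possibility_frame Ecal /\ quasi_principal Ecal /\
  (exists m, (forall w, le w m) /\
     (forall w, Acal w m)) /\
  (forall w v, Acal w v -> Ecal (down1 v)) /\
  (forall w w', le w' w -> forall v, Acal w v -> Acal w' v) /\
  (forall w v, ~ Acal w v ->
     exists w', le w' w /\ forall w'', le w'' w' -> ~ Acal w'' v) /\
  (forall w v E E', Acal w v -> Ecal E -> Ecal E' ->
     (forall u, union (maxs (inter E (down1 v))) (maxs (inter E' (down1 v))) u -> Acal w u) ->
     (forall u, maxs (inter (joins E E') (down1 v)) u -> Acal w u)) /\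
  (forall E, Ecal E -> Ecal (boldA Acal E)).

(* conditions on an accessibility map R : Omega -> pset (R w u means u ∈ R(w)) *)
Definition accessibility_ok (Ecal : pset -> Prop) (R : Omega -> Omega -> Prop) : Prop :=
  (forall w w', le w' w -> subset (R w') (R w)) /\
  (forall w, RO (R w)) /\
  (forall w v, R w v -> exists w', le w' w /\
      forall w'', le w'' w' -> exists v', le v' v /\ R w'' v') /\
  (forall E, Ecal E -> Ecal (fun w => subset (R w) E)).

Definition epistemic_frame (Ecal : pset -> Prop) (Acal Kc Bc : Omega -> Omega -> Prop) : Prop :=
  awareness_frame Ecal Acal /\
  accessibility_ok Ecal Kc /\ accessibility_ok Ecal Bc /\
  (forall w, Kc w w) /\
  (forall w, exists u, Bc w u) /\
  (forall w, subset (Bc w) (Kc w)).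

Definition boldK (Acal Kc : Omega -> Omega -> Prop) (E : pset) : pset :=
  fun w => subset (Kc w) E /\ boldA Acal E w.
Definition boldB (Acal Bc : Omega -> Omega -> Prop) (E : pset) : pset :=
  fun w => subset (Bc w) E /\ boldA Acal E w.

End PossDefs.

Definition boolean_algebra_on (X : Type) (C : X -> Prop) (le : X -> X -> Prop)
  (meet join : X -> X -> X) (neg : X -> X) (bot top : X) : Prop :=
  C bot /\ C top /\
  (forall a b, C a -> C b -> C (meet a b)) /\
  (forall a b, C a -> C b -> C (join a b)) /\
  (forall a, C a -> C (neg a)) /\
  (forall a, C a -> le a a) /\
  (forall a b c, C a -> C b -> C c -> le a b -> le b c -> le a c) /\
  (forall a b, C a -> C b -> le a b -> le b a -> a = b) /\
  (forall a b, C a -> C b -> le (meet a b) a /\ le (meet a b) b) /\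
  (forall a b c, C a -> C b -> C c -> le c a -> le c b -> le c (meet a b)) /\
  (forall a b, C a -> C b -> le a (join a b) /\ le b (join a b)) /\
  (forall a b c, C a -> C b -> C c -> le a c -> le b c -> le (join a b) c) /\
  (forall a, C a -> le bot a /\ le a top) /\
  (forall a b c, C a -> C b -> C c -> meet a (join b c) = join (meet a b) (meet a c)) /\
  (forall a, C a -> meet a (neg a) = bot /\ join a (neg a) = top).

Definition epistemic_awareness_algebra_on (X : Type) (C : X -> Prop) (le : X -> X -> Prop)
  (meet join : X -> X -> X) (neg : X -> X) (bot top : X) (A K B : X -> X) : Prop :=
  boolean_algebra_on C le meet join neg bot top /\
  (forall a, C a -> C (A a) /\ C (K a) /\ C (B a)) /\
  A top = top /\
  (forall a, C a -> A a = A (neg a)) /\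
  (forall a b, C a -> C b -> le (meet (A a) (A b)) (A (meet a b))) /\
  K top = top /\
  (forall Box, (Box = K \/ Box = B) ->
     (forall a b, C a -> C b -> le (meet (Box a) (Box b)) (Box (meet a b))) /\
     (forall a b, C a -> C b -> le a b -> le (meet (Box a) (A b)) (Box b))) /\
  (forall a, C a -> le (K a) a) /\
  B bot = bot /\
  (forall a, C a -> le (K a) (B a)) /\
  (forall a, C a -> le (B a) (A a)).

(* Main.v *)
Require Import Defs.
From Stdlib Require Import Classical FunctionalExtensionality PropExtensionality.

Lemma pext (Omega : Type) (E F : pset Omega) : (forall w, E w <-> F w) -> E = F.
Proof. intro H. apply functional_extensionality; intro w.
  apply propositional_extensionality; apply H. Qed.

Definition dclosed {Omega:Type} (le : Omega -> Omega -> Prop) (E : pset Omega) :=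
  forall w w', le w' w -> E w -> E w'.

Lemma RO_dclosed {Omega} le (E : pset Omega) :
  (forall u v w, le u v -> le v w -> le u w) -> RO le E -> dclosed le E.
Proof. intros tr HR w w' Hw' Hw. apply HR. apply HR in Hw. intros x Hx.
  apply Hw. eapply tr; eauto. Qed.

Lemma negs_dclosed {Omega} le (E : pset Omega) :
  (forall u v w, le u v -> le v w -> le u w) -> dclosed le (negs le E).
Proof. intros tr w w' H1 H2 x Hx. apply H2. eapply tr; eauto. Qed.

Lemma negneg {Omega} le (E : pset Omega) : (forall w, le w w) -> dclosed le E ->
  forall w, negs le (negs le E) w <-> rho le E w.
Proof.
  intros refl dc w; split.
  - intros H w' Hw'.
    destruct (classic (exists w'', le w'' w' /\ E w'')) as [[w'' [h1 h2]]|Hn].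
    + exists w''; split; auto. exists w''; split; auto.
    + exfalso; apply (H w' Hw'); intros w'' h1 h2; apply Hn; eauto.
  - intros H w' Hw' Hneg. destruct (H w' Hw') as [w'' [h1 [x [hx hl]]]].
    apply (Hneg w'' h1). apply dc with x; auto.
Qed.

Lemma negs_union {Omega} le (E F : pset Omega) :
  negs le (union E F) = inter (negs le E) (negs le F).
Proof. apply pext; intro w; unfold negs, union, inter; split.
  - intros H; split; intros w' h1 h2; apply (H w' h1); auto.
  - intros [H1 H2] w' h [h'|h']; [apply (H1 w' h)|apply (H2 w' h)]; auto.
Qed.

Theorem proposition4p3 (Omega : Type) (le : Omega -> Omega -> Prop)
  (Ecal : pset Omega -> Prop) (Acal Kc Bc : Omega -> Omega -> Prop) :
  epistemic_frame le Ecal Acal Kc Bc ->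
  epistemic_awareness_algebra_on Ecal (@subset Omega)
    (@inter Omega) (joins le) (negs le) (@emptyset Omega) (@fullset Omega)
    (boldA le Acal) (boldK le Acal Kc) (boldB le Acal Bc).
Proof.
  intros [[[[refl [tr anti]] [ERO [[E0 HE0] [Einter Eneg]]]]
           [qp [[m [Hm1 Hm2]] [Edown [Amono [Aref [Ajoin Aclos]]]]]]]
          [[Kmono [KRO [Kx Kclos]]] [[Bmono [BRO [Bx Bclos]]] [Krefl [Bser BsubK]]]]].
  assert (dc : forall a, Ecal a -> dclosed le a).
  { intros a Ha; apply RO_dclosed; auto. }
  assert (nn : forall a, Ecal a -> negs le (negs le a) = a).
  { intros a Ha; apply pext; intro w. rewrite negneg; [apply ERO|..]; auto. }
  assert (joinE : forall a b, Ecal a -> Ecal b ->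
     joins le a b = negs le (inter (negs le a) (negs le b))).
  { intros a b Ha Hb. rewrite <- negs_union. apply pext; intro w.
    unfold joins. rewrite negneg. tauto. auto.
    intros x y h [hy|hy]; [left; apply (dc a Ha) with x|right; apply (dc b Hb) with x]; auto.
    }
  assert (Ejoin : forall a b, Ecal a -> Ecal b -> Ecal (joins le a b)).
  { intros a b Ha Hb; rewrite joinE; auto. }
  assert (Eempty : Ecal (@emptyset Omega)).
  { replace (@emptyset Omega) with (inter E0 (negs le E0)); auto.
    apply pext; intro w; unfold inter, negs, emptyset; split; [|tauto].
    intros [h1 h2]; apply (h2 w (refl w) h1). }
  assert (efull : @fullset Omega = negs le (@emptyset Omega)).
  { apply pext; intro w; unfold fullset, negs, emptyset; split; auto. }
  assert (Efull : Ecal (@fullset Omega)). { rewrite efull; auto. }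
  assert (Ameet : forall a b, Ecal a -> Ecal b ->
     subset (inter (boldA le Acal a) (boldA le Acal b)) (boldA le Acal (inter a b))).
  { intros a b Ha Hb w [HA HB] w' hw' v Hv u [Hu|Hu].
    - destruct Hu as [[[ua ub] uv] Humax].
      assert (Edv : Ecal (down1 le v)) by (exact (Edown w' v Hv)).
      destruct (qp (inter a (down1 le v)) u (Einter _ _ Ha Edv) (conj ua uv)) as [v' [Hv'max huv']].
      assert (Av' : Acal w' v') by (exact (HA w' hw' v Hv v' (or_introl Hv'max))).
      apply (HB w' hw' v' Av' u). left. split. split; auto. exists v'; split; auto.
      intros [x [[xb xv'] [hux hnx]]]. apply Humax. exists x.
      destruct Hv'max as [[v'a [y [ey v'v]]] _]. subst y.
      destruct xv' as [y [ey xv']]. subst y.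
      split; [split;[split|]|split]; auto.
      + apply (dc a Ha v' x); auto.
      + exists v; split; auto. eapply tr; eauto.
    - assert (eq : negs le (inter a b) = joins le (negs le a) (negs le b)).
      { rewrite joinE by auto. rewrite !nn by auto. reflexivity. }
      rewrite eq in Hu.
      apply (Ajoin w' v (negs le a) (negs le b) Hv (Eneg _ Ha) (Eneg _ Hb)); auto.
      intros u' [H|H].
      + apply (HA w' hw' v Hv u'); right; auto.
      + apply (HB w' hw' v Hv u'); right; auto. }
  assert (Atop : boldA le Acal (@fullset Omega) = @fullset Omega).
  { apply pext; intro w; split; [intros; exact I|]. intros _ w' hw' v Hv u [Hu|Hu].
    - destruct Hu as [[_ [y [ey hy]]] Hmax]. subst y.
      replace u with v; auto. apply anti; auto.
      destruct (classic (le v u)) as [h|h]; auto. exfalso; apply Hmax.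
      exists v. split; [split|split]; auto. exact I. exists v; split; auto.
    - destruct Hu as [[Hn _] _]. exfalso. apply (Hn u (refl u)). exact I. }
  unfold epistemic_awareness_algebra_on, boolean_algebra_on.
  split; [|split; [|split; [|split; [|split; [|split; [|split; [|split; [|split; [|split]]]]]]]]].
  -
    split; [auto|]. split; [auto|]. split; [auto|]. split; [auto|]. split; [auto|].
    split; [intros a _ w; auto|].
    split; [intros a b c _ _ _ h1 h2 w hw; auto|].
    split; [intros a b _ _ h1 h2; apply pext; intro w; split; auto|].
    split; [intros a b _ _; split; intros w [h1 h2]; auto|].
    split; [intros a b c _ _ _ h1 h2 w hw; split; auto|].
    split.
    { intros a b Ha Hb; split; intros w hw w' hw'; exists w'; split; auto; exists w'; split; auto;
      [left; apply (dc a Ha) with w|right; apply (dc b Hb) with w]; auto. }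
    split.
    { intros a b c Ha Hb Hc h1 h2 w hw. apply (ERO c Hc). intros w' hw'.
      destruct (hw w' hw') as [w'' [h3 [x [[hx|hx] hl]]]]; exists w''; split; auto; exists x; split; auto. }
    split; [intros a _; split; intros w hw; [destruct hw|exact I]|].
    split.
    { intros a b c Ha Hb Hc. apply pext; intro w; split.
      - intros [wa wbc]. intros w' hw'. destruct (wbc w' hw') as [w'' [h3 [x [hx hl]]]].
        exists w''; split; auto. exists w''; split; auto.
        assert (w''a : a w'') by (apply (dc a Ha) with w; eauto).
        destruct hx as [hx|hx]; [left|right]; split; auto;
        [apply (dc b Hb) with x|apply (dc c Hc) with x]; auto.
      - intros hw. split.
        + apply (ERO a Ha). intros w' hw'. destruct (hw w' hw') as [w'' [h3 [x [hx hl]]]].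
          exists w''; split; auto. exists x; split; auto. destruct hx as [[hx _]|[hx _]]; auto.
        + intros w' hw'. destruct (hw w' hw') as [w'' [h3 [x [hx hl]]]].
          exists w''; split; auto. exists x; split; auto. destruct hx as [[_ hx]|[_ hx]]; [left|right]; auto. }
    intros a Ha; split; apply pext; intro w; split.
    + intros [h1 h2]; apply (h2 w (refl w) h1).
    + intros [].
    + intros; exact I.
    + intros _ w' hw'.
      destruct (classic (exists w'', le w'' w' /\ a w'')) as [[w'' [h1 h2]]|Hn].
      * exists w''; split; auto. exists w''; split; auto. left; auto.
      * exists w'; split; auto. exists w'; split; auto. right.
        intros w'' h1 h2; apply Hn; eauto.
  - intros a Ha; split; [auto|split]; [apply (Einter (fun w => subset (Kc w) a) (boldA le Acal a))|apply (Einter (fun w => subset (Bc w) a) (boldA le Acal a))]; auto.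
  - exact Atop.
  - intros a Ha. assert (nn' := nn a Ha). apply pext; intro w; unfold boldA; split;
      intros H w' hw' v Hv u [Hu|Hu]; apply (H w' hw' v Hv u);
      [right|left; rewrite <- nn' at 1|right; rewrite nn'|left]; auto.
  - exact Ameet.
  - apply pext; intro w; split; [intros; exact I|]. intros _. split.
    + intros u _; exact I.
    + rewrite Atop; exact I.
  - intros Box [-> | ->]; split.
    + intros a b Ha Hb w [[k1 a1] [k2 a2]]. split.
      * intros u hu; split; auto.
      * apply Ameet; auto. split; auto.
    + intros a b Ha Hb hab w [[k1 a1] a2]. split; auto. intros u hu; apply hab, k1, hu.
    + intros a b Ha Hb w [[k1 a1] [k2 a2]]. split.
      * intros u hu; split; auto.
      * apply Ameet; auto. split; auto.
    + intros a b Ha Hb hab w [[k1 a1] a2]. split; auto. intros u hu; apply hab, k1, hu.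
  - intros a Ha w [hk _]. apply hk, Krefl.
  - apply pext; intro w; split; [|intros []]. intros [hb _].
    destruct (Bser w) as [u hu]. exact (hb u hu).
  - intros a Ha w [hk ha]. split; auto. intros u hu; apply hk, BsubK, hu.
  - intros a Ha w [_ ha]; auto.
Qed.
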